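(* Under the hypotheses of the Monopoly Theorem ($v_1\ge\cdots\ge v_n>0$, $A_i>0$, $1\ge q_1>q_2>\cdots>q_n\ge0$), let $\lambda_t=\frac{\sum_i v_i a_{i,t} q_i}{\sum_i v_i a_{i,t}}$ be the conditional probability of a purchase at step $t$ under the quality ranking. Then $\lambda_t\to q_1$ almost surely as $t\to\infty$, while for every ranking $\sigma\in S_n$ and every appeal vector $b\in(0,\infty)^n$ one has $\sum_i \frac{v_{\sigma_i} b_i}{\sum_j v_{\sigma_j}b_j}q_i\le q_1$. Thus the per-step purchase probability of the quality ranking asymptotically attains the maximum possible value.
   Context: Dynamic trial-offer market with social influence under the quality ranking: product $i$ is permanently in position $i$ with visibility $v_i$; $d_{i,t}$ is the number of purchases of product $i$ before step $t$ ($d_{i,1}=0$), $a_{i,t}=A_i+d_{i,t}$; at step $t$ a participant tries product $i$ with probability $\frac{v_i a_{i,t}}{\sum_j v_j a_{j,t}}$ and purchases it with probability $q_i$, in which case $d_{i,t+1}=d_{i,t}+1$. A ranking $\sigma\in S_n$ places product $i$ in position $\sigma_i$. *)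

(* Defs.v *)
From Stdlib Require Import Reals Lra Lia Arith.
Open Scope R_scope.

(* Products are indexed 0..n-1; product i (0-based) is in position i.
   Finite sum over indices 0..n-1. *)
Fixpoint fsum (n : nat) (f : nat -> R) : R :=
  match n with
  | O => 0
  | S k => fsum k f + f k
  end.

(* appeal a_{i,t} = A_i + d_{i,t} for a purchase-count state d *)
Definition appeal (A : nat -> R) (d : nat -> nat) (i : nat) : R := A i + INR (d i).

Definition tryp (n : nat) (v A : nat -> R) (d : nat -> nat) (i : nat) : R :=
  v i * appeal A d i / fsum n (fun j => v j * appeal A d j).

Definition lam (n : nat) (v A q : nat -> R) (d : nat -> nat) : R :=
  fsum n (fun i => v i * appeal A d i * q i) / fsum n (fun j => v j * appeal A d j).

Definition incr (d : nat -> nat) (i : nat) : nat -> nat :=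
  fun j => if Nat.eqb j i then S (d j) else d j.

Definition bad (n : nat) (v A q : nat -> R) (eps : R) (d : nat -> nat) : bool :=
  if Rlt_dec eps (Rabs (lam n v A q d - q 0%nat)) then true else false.

(* badp t0 k s d = probability, for the market process started at step s in
   state d, that some step s' with s <= s' <= s+k-1 and s' >= t0 has
   |lambda_{s'} - q_1| > eps. *)
Fixpoint badp (n : nat) (v A q : nat -> R) (eps : R) (t0 : nat)
         (k s : nat) (d : nat -> nat) : R :=
  match k with
  | O => 0
  | S k' =>
      if andb (Nat.leb t0 s) (bad n v A q eps d) then 1
      else (1 - lam n v A q d) * badp n v A q eps t0 k' (S s) d
           + fsum n (fun i => tryp n v A d i * q i
                               * badp n v A q eps t0 k' (S s) (incr d i))
  end.

Definition is_perm (n : nat) (sigma : nat -> nat) : Prop :=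
  (forall i, (i < n)%nat -> (sigma i < n)%nat) /\
  (forall i j, (i < n)%nat -> (j < n)%nat -> sigma i = sigma j -> i = j).

(* Main.v *)
Require Import Defs.
From Stdlib Require Import Reals Lra Lia Arith Classical ZArith.
Open Scope R_scope.

Lemma fsum_ext n f g : (forall i, (i < n)%nat -> f i = g i) -> fsum n f = fsum n g.
Proof. induction n; simpl; intros H; auto. rewrite IHn; [rewrite H|]; auto; intros; apply H; lia. Qed.

Lemma fsum_le n f g : (forall i, (i < n)%nat -> f i <= g i) -> fsum n f <= fsum n g.
Proof. induction n; simpl; intros H; [lra|]. assert (fsum n f <= fsum n g) by (apply IHn; intros; apply H; lia).
 assert (f n <= g n) by (apply H; lia). lra. Qed.

Lemma fsum_plus n f g : fsum n (fun i => f i + g i) = fsum n f + fsum n g.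
Proof. induction n; simpl; [lra|]. rewrite IHn; lra. Qed.

Lemma fsum_scal n c f : fsum n (fun i => c * f i) = c * fsum n f.
Proof. induction n; simpl; [lra|]. rewrite IHn; lra. Qed.

Lemma fsum_div n c f : fsum n (fun i => f i / c) = fsum n f / c.
Proof. induction n; simpl; [unfold Rdiv; lra|]. rewrite IHn; unfold Rdiv; lra. Qed.

Lemma fsum_nonneg n f : (forall i, (i < n)%nat -> 0 <= f i) -> 0 <= fsum n f.
Proof. intros H. apply Rle_trans with (fsum n (fun _ => 0)).
 - clear H; induction n; simpl; lra.
 - apply fsum_le; auto. Qed.

Lemma fsum_ge_term n f k : (forall i, (i < n)%nat -> 0 <= f i) -> (k < n)%nat -> f k <= fsum n f.
Proof. induction n; intros H Hk; [lia|]. simpl. destruct (Nat.eq_dec k n).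
 - subst. assert (0 <= fsum n f) by (apply fsum_nonneg; intros; apply H; lia). lra.
 - assert (f k <= fsum n f) by (apply IHn; [intros; apply H; lia| lia]).
   assert (0 <= f n) by (apply H; lia). lra. Qed.

Lemma fsum_pos n f : (1 <= n)%nat -> (forall i, (i < n)%nat -> 0 < f i) -> 0 < fsum n f.
Proof. intros Hn H. assert (f 0%nat <= fsum n f) by (apply fsum_ge_term; [intros; apply Rlt_le, H; auto| lia]).
 assert (0 < f 0%nat) by (apply H; lia). lra. Qed.

Lemma fsum_const_le n f X : (forall i, (i < n)%nat -> f i <= X) -> fsum n f <= INR n * X.
Proof. induction n; cbn [fsum]; intros H; [simpl; lra|]. assert (fsum n f <= INR n * X) by (apply IHn; intros; apply H; lia).
 assert (f n <= X) by (apply H; lia). rewrite S_INR. lra. Qed.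

Lemma fsum_indic n k X : (k < n)%nat -> fsum n (fun i => if Nat.eqb i k then X else 0) = X.
Proof. induction n; intros Hk; [lia|]. simpl. destruct (Nat.eqb_spec n k).
 - subst. assert (fsum k (fun i => if Nat.eqb i k then X else 0) = 0).
   { clear. assert (forall p, (p <= k)%nat -> fsum p (fun i => if Nat.eqb i k then X else 0) = 0); [|apply H; lia].
     induction p; simpl; intros; auto. rewrite IHp by lia. destruct (Nat.eqb_spec p k); [lia|lra]. }
   rewrite H; lra.
 - rewrite IHn by lia. lra. Qed.

Lemma fsum_indic0 n X : fsum n (fun i => if Nat.eqb i 0 then 0 else X) = INR (pred n) * X.
Proof. induction n; simpl; [lra|]. rewrite IHn. destruct n; simpl; [lra|]. destruct n; simpl; lra. Qed.

Lemma fsum_swap n m (f : nat -> nat -> R) :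
  fsum n (fun i => fsum m (fun j => f i j)) = fsum m (fun j => fsum n (fun i => f i j)).
Proof. induction n; simpl.
 - clear; induction m; simpl; lra.
 - rewrite IHn. rewrite <- fsum_plus. reflexivity. Qed.

Fixpoint natsum (n : nat) (d : nat -> nat) : nat :=
  match n with O => O | S k => (natsum k d + d k)%nat end.

Lemma natsum_incr n d i : (i < n)%nat -> natsum n (incr d i) = S (natsum n d).
Proof. induction n; intros Hi; [lia|]. simpl. unfold incr at 2. destruct (Nat.eqb_spec n i).
 - subst. assert (forall p, (p <= i)%nat -> natsum p (incr d i) = natsum p d).
   { induction p; simpl; intros; auto. rewrite IHp by lia. unfold incr. destruct (Nat.eqb_spec p i); [lia|auto]. }
   rewrite H by lia. lia.
 - rewrite IHn by lia. lia. Qed.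

Lemma INR_natsum n d : INR (natsum n d) = fsum n (fun i => INR (d i)).
Proof. induction n; simpl; auto. rewrite plus_INR, IHn. auto. Qed.

Lemma ln_le_sub1 y : 0 < y -> ln y <= y - 1.
Proof. intros Hy. pose proof (exp_ineq1_le (ln y)). rewrite exp_ln in H; lra. Qed.

Lemma ln_ge y : 0 < y -> 1 - / y <= ln y.
Proof. intros Hy. pose proof (ln_le_sub1 (/ y) (Rinv_0_lt_compat _ Hy)). rewrite ln_Rinv in H; lra. Qed.

Lemma ln_le' x y : 0 < x -> x <= y -> ln x <= ln y.
Proof. intros Hx [H|H]; [apply Rlt_le, ln_increasing; auto| subst; lra]. Qed.

Lemma ln_quot x y : 0 < x -> 0 < y -> ln (x / y) = ln x - ln y.
Proof. intros; unfold Rdiv; rewrite ln_mult, ln_Rinv; try lra; apply Rinv_0_lt_compat; auto. Qed.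

Lemma ln_step_up z : 0 < z -> ln (z + 1) - ln z <= 1 / z.
Proof. intros Hz. rewrite <- ln_quot by lra. pose proof (ln_le_sub1 ((z+1)/z)).
 assert (0 < (z+1)/z) by (apply Rdiv_lt_0_compat; lra). assert ((z+1)/z - 1 = 1/z) by (field; lra). lra. Qed.

Lemma ln_step_low y : 0 < y -> 1 / (y + 1) <= ln (y + 1) - ln y.
Proof. intros Hy. rewrite <- ln_quot by lra. pose proof (ln_ge ((y+1)/y)).
 assert (0 < (y+1)/y) by (apply Rdiv_lt_0_compat; lra). assert (1 - / ((y+1)/y) = 1/(y+1)) by (field; lra). lra. Qed.

Lemma pow_le_dec x a b : 0 <= x <= 1 -> (a <= b)%nat -> x ^ b <= x ^ a.
Proof. intros Hx Hab. induction Hab; [lra|]. simpl. assert (0 <= x ^ m) by (apply pow_le; lra). nra. Qed.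

Lemma nat_above x : exists N : nat, x <= INR N.
Proof. destruct (archimed x) as [H1 _]. destruct (Z.le_gt_cases 0 (up x)).
 - exists (Z.to_nat (up x)). rewrite INR_IZR_INZ, Z2Nat.id by auto. lra.
 - exists 0%nat. simpl. apply Rlt_le, Rlt_trans with (IZR (up x)); auto. apply IZR_lt; lia. Qed.

Definition WW n v A d := fsum n (fun j => v j * appeal A d j).

Definition Ex n v A q (F : (nat -> nat) -> R) d :=
  (1 - lam n v A q d) * F d + fsum n (fun i => tryp n v A d i * q i * F (incr d i)).

Lemma sum_tq n v A q d : fsum n (fun i => tryp n v A d i * q i) = lam n v A q d.
Proof. unfold lam. rewrite <- fsum_div. apply fsum_ext; intros. unfold tryp; unfold Rdiv; ring. Qed.

Lemma Ex_decomp n v A q F X d : (forall i, (i < n)%nat -> F (incr d i) = F d + X i) ->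
  Ex n v A q F d = F d + fsum n (fun i => tryp n v A d i * q i * X i).
Proof. intros H. unfold Ex.
 rewrite (fsum_ext n _ (fun i => F d * (tryp n v A d i * q i) + tryp n v A d i * q i * X i)).
 - rewrite fsum_plus, fsum_scal, sum_tq. ring.
 - intros. rewrite H; auto; ring. Qed.

Lemma Ex_plus n v A q F G d : Ex n v A q (fun e => F e + G e) d = Ex n v A q F d + Ex n v A q G d.
Proof. unfold Ex. rewrite (fsum_ext n _ (fun i => tryp n v A d i * q i * F (incr d i) + tryp n v A d i * q i * G (incr d i))).
 - rewrite fsum_plus. ring.
 - intros; ring. Qed.

Lemma Ex_scal n v A q c F d : Ex n v A q (fun e => c * F e) d = c * Ex n v A q F d.
Proof. unfold Ex. rewrite (fsum_ext n _ (fun i => c * (tryp n v A d i * q i * F (incr d i)))).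
 - rewrite fsum_scal. ring.
 - intros; ring. Qed.

Lemma Ex_fsum n v A q m (F : nat -> (nat -> nat) -> R) d :
  Ex n v A q (fun e => fsum m (fun j => F j e)) d = fsum m (fun j => Ex n v A q (F j) d).
Proof. induction m.
 - unfold Ex; simpl. rewrite (fsum_ext n _ (fun _ => 0)); [|intros; ring]. clear. induction n; simpl; lra.
 - cbn [fsum]. rewrite Ex_plus, IHm. reflexivity. Qed.

Lemma Ex_mono n v A q F G d : (forall i, (i < n)%nat -> 0 <= tryp n v A d i * q i) -> 0 <= 1 - lam n v A q d ->
  F d <= G d -> (forall i, (i < n)%nat -> F (incr d i) <= G (incr d i)) -> Ex n v A q F d <= Ex n v A q G d.
Proof. intros H1 H2 H3 H4. unfold Ex. apply Rplus_le_compat.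
 - apply Rmult_le_compat_l; auto.
 - apply fsum_le; intros. apply Rmult_le_compat_l; auto. Qed.


Definition Hyps n (v A q : nat -> R) := (1 <= n)%nat /\ (forall i j, (i <= j)%nat -> (j < n)%nat -> v j <= v i) /\
  (forall i, (i < n)%nat -> 0 < v i) /\ (forall i, (i < n)%nat -> 0 < A i) /\ q 0%nat <= 1 /\
  (forall i, (S i < n)%nat -> q (S i) < q i) /\ 0 <= q (pred n).

Lemma q_mono n v A q : Hyps n v A q -> forall i j, (i <= j)%nat -> (j < n)%nat -> q j <= q i.
Proof. intros (_&_&_&_&_&Hq&_) i j Hij. induction Hij; intros; [lra|].
 assert (q (S m) < q m) by (apply Hq; lia). assert (q m <= q i) by (apply IHHij; lia). lra. Qed.

Lemma q_nonneg n v A q : Hyps n v A q -> forall i, (i < n)%nat -> 0 <= q i.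
Proof. intros H i Hi. pose proof (q_mono _ _ _ _ H i (pred n)) as H1. destruct H as (_&_&_&_&_&_&H0). assert (q (pred n) <= q i) by (apply H1; lia). lra. Qed.

Lemma q_le1 n v A q : Hyps n v A q -> forall i, (i < n)%nat -> q i <= 1.
Proof. intros H i Hi. pose proof (q_mono _ _ _ _ H 0 i) as H0. destruct H as (_&_&_&_&H1&_). assert (q i <= q 0%nat) by (apply H0; lia). lra. Qed.

Lemma appeal_ge n v A q d i : Hyps n v A q -> (i < n)%nat -> A i <= appeal A d i /\ 0 < appeal A d i.
Proof. intros (_&_&_&HA&_) Hi. unfold appeal. pose proof (pos_INR (d i)). pose proof (HA i Hi). lra. Qed.

Lemma W_pos n v A q d : Hyps n v A q -> 0 < WW n v A d.
Proof. intros H. unfold WW. apply fsum_pos; [apply H|]. intros. destruct (appeal_ge n v A q d i H H0).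
 destruct H as (_&_&Hv&_). apply Rmult_lt_0_compat; auto. Qed.

Lemma tryp_nonneg n v A q d i : Hyps n v A q -> (i < n)%nat -> 0 <= tryp n v A d i.
Proof. intros H Hi. unfold tryp. pose proof (W_pos n v A q d H). unfold WW in H0. destruct (appeal_ge n v A q d i H Hi).
 destruct H as (_&_&Hv&_). pose proof (Hv i Hi). apply Rlt_le, Rdiv_lt_0_compat; auto. apply Rmult_lt_0_compat; auto. Qed.

Lemma tq_nonneg n v A q d i : Hyps n v A q -> (i < n)%nat -> 0 <= tryp n v A d i * q i.
Proof. intros. apply Rmult_le_pos; [apply (tryp_nonneg n v A q)|apply (q_nonneg n v A q)]; auto. Qed.

Lemma sum_tryp n v A q d : Hyps n v A q -> fsum n (fun i => tryp n v A d i) = 1.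
Proof. intros H. pose proof (W_pos n v A q d H). unfold WW in H0. unfold tryp. rewrite fsum_div. field. lra. Qed.

Lemma q0_lam n v A q d : Hyps n v A q -> q 0%nat - lam n v A q d = fsum n (fun i => tryp n v A d i * (q 0%nat - q i)).
Proof. intros H. rewrite <- sum_tq.
 rewrite (fsum_ext n (fun i => tryp n v A d i * (q 0%nat - q i)) (fun i => q 0%nat * tryp n v A d i + -1 * (tryp n v A d i * q i))) by (intros; ring).
 rewrite fsum_plus, !fsum_scal, (sum_tryp n v A q) by auto. ring. Qed.

Lemma lam_le_q0 n v A q d : Hyps n v A q -> lam n v A q d <= q 0%nat.
Proof. intros H. assert (0 <= q 0%nat - lam n v A q d); [|lra]. rewrite q0_lam by auto. apply fsum_nonneg; intros.
 apply Rmult_le_pos; [apply (tryp_nonneg n v A q); auto|]. assert (q i <= q 0%nat) by (apply (q_mono n v A q); auto; lia). lra. Qed.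

Lemma lam_le1 n v A q d : Hyps n v A q -> 0 <= 1 - lam n v A q d.
Proof. intros H. pose proof (lam_le_q0 n v A q d H). destruct H as (_&_&_&_&H1&_). lra. Qed.

Lemma lam_nonneg n v A q d : Hyps n v A q -> 0 <= lam n v A q d.
Proof. intros H. rewrite <- sum_tq. apply fsum_nonneg. intros; apply (tq_nonneg n v A q); auto. Qed.

Lemma bad_imp n v A q eps d : Hyps n v A q -> bad n v A q eps d = true -> eps < q 0%nat - lam n v A q d.
Proof. intros H. unfold bad. destruct (Rlt_dec _ _); intros; [|discriminate].
 pose proof (lam_le_q0 n v A q d H). rewrite Rabs_left1 in r; lra. Qed.

Definition Inv n (q : nat -> R) (d : nat -> nat) := forall i, (i < n)%nat -> q i = 0 -> d i = 0%nat.

Lemma badp_le n v A q eps t0 (Phi : nat -> (nat -> nat) -> R) : Hyps n v A q ->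
  (forall s d, Inv n q d -> 0 <= Phi s d) ->
  (forall s d, Inv n q d -> (t0 <= s)%nat -> bad n v A q eps d = true -> 1 <= Phi s d) ->
  (forall s d, Inv n q d -> Ex n v A q (Phi (S s)) d <= Phi s d) ->
  forall k s d, Inv n q d -> badp n v A q eps t0 k s d <= Phi s d.
Proof. intros H H0 H1 H2 k. induction k; intros s d Hd; simpl; [apply H0; auto|].
 assert (Hstep: (1 - lam n v A q d) * badp n v A q eps t0 k (S s) d +
   fsum n (fun i => tryp n v A d i * q i * badp n v A q eps t0 k (S s) (incr d i)) <= Phi s d).
 { apply Rle_trans with (Ex n v A q (Phi (S s)) d); [|apply H2; auto]. unfold Ex.
   apply Rplus_le_compat.
   - apply Rmult_le_compat_l; [apply (lam_le1 n v A q); auto| apply IHk; auto].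
   - apply fsum_le; intros i Hi. destruct (Req_dec (q i) 0) as [Hq|Hq]; [rewrite Hq; lra|].
     apply Rmult_le_compat_l; [apply (tq_nonneg n v A q); auto|]. apply IHk.
     intros j Hj Hqj; unfold incr; destruct (Nat.eqb_spec j i); [subst; contradiction| apply Hd; auto]. }
 destruct (Nat.leb_spec t0 s); destruct (bad n v A q eps d) eqn:Eb; simpl; auto; apply H1; auto; lia.

Qed.

Lemma le_div x y z : 0 < z -> x * z <= y -> x <= y / z.
Proof. intros Hz H. apply Rmult_le_reg_r with z; auto. unfold Rdiv. rewrite Rmult_assoc, Rinv_l; lra. Qed.

Lemma div_le x y z : 0 < z -> x <= y * z -> x / z <= y.
Proof. intros Hz H. apply Rmult_le_reg_r with z; auto. unfold Rdiv. rewrite Rmult_assoc, Rinv_l; lra. Qed.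

Lemma lam_lower n v A q : Hyps n v A q -> (2 <= n)%nat ->
  exists lm, 0 < lm /\ forall d, Inv n q d -> lm <= lam n v A q d.
Proof. intros H Hn. pose proof (q_nonneg n v A q H) as Hqn. destruct (Req_dec (q (pred n)) 0) as [H0|H0].
 - destruct n as [|[|p]]; try lia. simpl in H0. pose proof H as (_&Hv&Hvp&HA&_&Hq&_).
   assert (Hqp : 0 < q p) by (pose proof (Hq p ltac:(lia)); lra).
   set (a := v 0%nat * A 0%nat). set (C := v (S p) * A (S p)).
   assert (Ha : 0 < a) by (apply Rmult_lt_0_compat; [apply Hvp|apply HA]; lia).
   assert (HC : 0 < C) by (apply Rmult_lt_0_compat; [apply Hvp|apply HA]; lia).
   exists (q p * a / (a + C)). split; [apply Rdiv_lt_0_compat; [apply Rmult_lt_0_compat|]; lra|].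
   intros d Hd. assert (Hd0 : d (S p) = 0%nat) by (apply Hd; auto).
   unfold lam. change (fsum (S (S p)) ?f) with (fsum (S p) f + f (S p)).
   unfold appeal at 2 4. rewrite Hd0, H0. simpl INR. rewrite Rplus_0_r. fold C.
   set (F := fsum (S p) (fun j => v j * appeal A d j)).
   set (X := fsum (S p) (fun i => v i * appeal A d i * q i)).
   assert (HX : q p * F <= X).
   { unfold F, X. rewrite <- fsum_scal. apply fsum_le. intros i Hi.
     assert (q p <= q i) by (apply (q_mono (S (S p)) v A q); auto; lia).
     destruct (appeal_ge (S (S p)) v A q d i H ltac:(lia)). assert (0 < v i) by (apply Hvp; lia). assert (0 < v i * appeal A d i) by (apply Rmult_lt_0_compat; auto). nra. }
   assert (HF : a <= F).
   { apply Rle_trans with (v 0%nat * appeal A d 0%nat).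
     - destruct (appeal_ge (S (S p)) v A q d 0 H ltac:(lia)). assert (0 < v 0%nat) by (apply Hvp; lia). unfold a. nra.
     - unfold F. apply (fsum_ge_term (S p) (fun j => v j * appeal A d j)); [|lia]. intros.
       destruct (appeal_ge (S (S p)) v A q d i H ltac:(lia)). assert (0 < v i) by (apply Hvp; lia). nra. }
   replace (X + C * 0) with X by ring. apply le_div; [lra|].
   replace (q p * a / (a + C) * (F + C)) with ((q p * a * (F + C)) / (a + C)) by (field; lra).
   apply div_le; [lra|]. assert (0 <= q p * ((F - a) * C)) by (apply Rmult_le_pos; [lra|apply Rmult_le_pos; lra]).
   assert (q p * a * (F + C) <= q p * F * (a + C)) by (ring_simplify; ring_simplify in H1; lra).
   assert (q p * F * (a + C) <= X * (a + C)) by (apply Rmult_le_compat_r; lra). lra.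
 - exists (q (pred n)). split; [pose proof (Hqn (pred n) ltac:(lia)); lra|]. intros d _.
   rewrite <- sum_tq. apply Rle_trans with (fsum n (fun i => tryp n v A d i * q (pred n))).
   + rewrite (fsum_ext n _ (fun i => q (pred n) * tryp n v A d i)) by (intros; ring). rewrite fsum_scal, (sum_tryp n v A q); auto; lra.
   + apply fsum_le. intros i Hi. apply Rmult_le_compat_l; [apply (tryp_nonneg n v A q); auto|]. apply (q_mono n v A q); auto; lia.
Qed.

Definition Lg (Aj m : R) (l : nat) := fsum l (fun i => ln (1 + m / (Aj + INR i))).
Definition Lh (A0 kap : R) (k : nat) := fsum k (fun i => ln (1 - kap / (A0 + INR i))).

Lemma Lg_lower Aj m l : 0 < Aj -> 0 < m -> m * (ln (Aj + m + INR l) - ln (Aj + m)) <= Lg Aj m l.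
Proof. intros HA Hm. induction l.
 - simpl. rewrite Rplus_0_r. unfold Lg; simpl. lra.
 - unfold Lg in *. cbn [fsum]. rewrite S_INR. pose proof (pos_INR l).
   set (x := Aj + INR l). set (z := Aj + m + INR l).
   assert (Hs := ln_step_up z ltac:(unfold z; lra)).
   replace (Aj + m + (INR l + 1)) with (z + 1) by (unfold z; ring).
   assert (Hg := ln_ge (1 + m / x) ltac:(assert (0 < m / x) by (apply Rdiv_lt_0_compat; unfold x; lra); lra)).
   assert (1 - / (1 + m / x) = m * (1 / z)) by (unfold x, z; field; lra).
   assert (m * (ln (z + 1) - ln z) <= m * (1 / z)) by (apply Rmult_le_compat_l; lra).
   fold x. change (Aj + m + INR l) with z in IHl. lra. Qed.

Lemma Hsum_upper b k : 0 < b -> fsum k (fun i => 1 / (b + INR i)) <= 1 / b + (ln (b + INR k) - ln b).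
Proof. intros Hb. assert (H1 : forall k, fsum (S k) (fun i => 1 / (b + INR i)) <= 1 / b + (ln (b + INR k) - ln b)).
 { induction k0.
   - simpl. rewrite Rplus_0_r. lra.
   - cbn [fsum] in *. pose proof (pos_INR k0). rewrite S_INR.
     pose proof (ln_step_low (b + INR k0) ltac:(lra)). replace (b + (INR k0 + 1)) with (b + INR k0 + 1) by ring. lra. }
 destruct k.
 - simpl. rewrite Rplus_0_r. assert (0 < 1 / b) by (apply Rdiv_lt_0_compat; lra). lra.
 - pose proof (H1 k). pose proof (pos_INR k). rewrite S_INR.
   assert (ln (b + INR k) <= ln (b + (INR k + 1))) by (apply ln_le'; lra). lra. Qed.

Lemma Lh_lower A0 kap k : 0 < kap -> kap < A0 ->
  - kap * (1 / (A0 - kap) + (ln (A0 - kap + INR k) - ln (A0 - kap))) <= Lh A0 kap k.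
Proof. intros Hk HkA. apply Rle_trans with (- kap * fsum k (fun i => 1 / (A0 - kap + INR i))).
 - pose proof (Hsum_upper (A0 - kap) k ltac:(lra)). nra.
 - rewrite <- fsum_scal. unfold Lh. apply fsum_le. intros i _. pose proof (pos_INR i).
   assert (0 < 1 - kap / (A0 + INR i)).
   { assert (kap / (A0 + INR i) < 1); [|lra]. apply Rmult_lt_reg_r with (A0 + INR i); [lra|].
     unfold Rdiv; rewrite Rmult_assoc, Rinv_l; lra. }
   pose proof (ln_ge _ H0). assert (1 - / (1 - kap / (A0 + INR i)) = - kap * (1 / (A0 - kap + INR i))) by (field; lra). lra.
Qed.

Lemma growth A0 Aj kap m c K : 0 < kap -> kap < A0 -> kap < m -> 0 < Aj -> 0 < c -> 0 < K ->
  exists L, 0 < L /\ forall k l : nat, L <= Aj + INR l -> c * (A0 + INR k) < Aj + INR l ->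
    ln K <= Lg Aj m l + Lh A0 kap k.
Proof. intros Hk HkA Hkm HAj Hc HK. set (b := A0 - kap). set (B := Aj + m).
 set (Cst := - m * ln B - kap * (1 / b) + kap * ln c + kap * ln b).
 set (Z := (ln K - Cst) / (m - kap)). exists (exp Z). split; [apply exp_pos|].
 intros k l H1 H2. pose proof (pos_INR k). pose proof (pos_INR l).
 set (Y := Aj + m + INR l).
 assert (HY : exp Z <= Y) by (unfold Y; lra). assert (HYp : 0 < Y) by (pose proof (exp_pos Z); lra).
 assert (HlnY : Z <= ln Y) by (rewrite <- (ln_exp Z); apply ln_le'; [apply exp_pos|auto]).
 pose proof (Lg_lower Aj m l HAj ltac:(lra)) as Hg. fold B in Hg. fold Y in Hg.
 pose proof (Lh_lower A0 kap k Hk HkA) as Hh. fold b in Hh.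
 assert (Hbk : b + INR k <= Y / c).
 { apply le_div; auto. unfold b, Y. nra. }
 assert (Hln : ln (b + INR k) <= ln Y - ln c).
 { rewrite <- ln_quot by lra. apply ln_le'; auto. unfold b; lra. }
 assert (HZ : (m - kap) * Z = ln K - Cst) by (unfold Z; field; lra).
 assert ((m - kap) * Z <= (m - kap) * ln Y) by (apply Rmult_le_compat_l; lra).
 assert (- kap * ln (b + INR k) >= - kap * (ln Y - ln c)) by nra.
 unfold Cst in HZ. change (B + INR l) with Y in Hg. lra.
Qed.

Definition kap (A : nat -> R) := A 0%nat / 2.
Definition rho (v q : nat -> R) j := v j * q j / (v 0%nat * q 0%nat).
Definition mj (v A q : nat -> R) j := 2 * kap A / (1 + rho v q j).
Definition G (v A q : nat -> R) j (d : nat -> nat) :=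
  exp (Lg (A j) (mj v A q j) (d j) + Lh (A 0%nat) (kap A) (d 0%nat)).

Lemma q_facts n v A q j : Hyps n v A q -> (1 <= j < n)%nat ->
  0 < q 0%nat /\ 0 <= q j /\ q j < q 0%nat.
Proof. intros H Hj. pose proof H as (_&_&_&_&_&Hq&_). assert (q 1%nat < q 0%nat) by (apply Hq; lia).
 assert (q j <= q 1%nat) by (apply (q_mono n v A q); auto; lia). pose proof (q_nonneg n v A q H j ltac:(lia)).
 repeat split; lra. Qed.

Lemma rho_facts n v A q j : Hyps n v A q -> (1 <= j < n)%nat -> 0 <= rho v q j < 1.
Proof. intros H Hj. destruct (q_facts n v A q j H Hj) as (H0&H1&H2). pose proof H as (_&Hv&Hvp&_).
 assert (0 < v 0%nat) by (apply Hvp; lia). assert (0 < v j) by (apply Hvp; lia). assert (v j <= v 0%nat) by (apply Hv; lia).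
 assert (0 < v 0%nat * q 0%nat) by (apply Rmult_lt_0_compat; auto). unfold rho. split.
 - apply Rmult_le_pos; [apply Rmult_le_pos; lra| apply Rlt_le, Rinv_0_lt_compat; auto].
 - apply Rmult_lt_reg_r with (v 0%nat * q 0%nat); auto. unfold Rdiv. rewrite Rmult_assoc, Rinv_l by lra.
   assert (v j * q j <= v 0%nat * q j) by (apply Rmult_le_compat_r; lra).
   assert (v 0%nat * q j < v 0%nat * q 0%nat) by (apply Rmult_lt_compat_l; lra). lra. Qed.

Lemma kap_facts n v A q : Hyps n v A q -> 0 < kap A /\ kap A < A 0%nat.
Proof. intros (Hn&_&_&HA&_). pose proof (HA 0%nat ltac:(lia)). unfold kap. lra. Qed.

Lemma mj_facts n v A q j : Hyps n v A q -> (1 <= j < n)%nat -> kap A < mj v A q j.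
Proof. intros H Hj. destruct (rho_facts n v A q j H Hj). destruct (kap_facts n v A q H). unfold mj.
 apply Rmult_lt_reg_r with (1 + rho v q j); [lra|]. unfold Rdiv. rewrite Rmult_assoc, Rinv_l by lra. nra. Qed.

Lemma G_super n v A q j d : Hyps n v A q -> (1 <= j < n)%nat -> Ex n v A q (G v A q j) d <= G v A q j d.
Proof. intros H Hj. set (Gd := G v A q j d). set (a0 := appeal A d 0%nat). set (aj := appeal A d j).
 set (k := kap A). set (m := mj v A q j).
 destruct (appeal_ge n v A q d 0 H ltac:(lia)) as [_ Ha0]. destruct (appeal_ge n v A q d j H ltac:(lia)) as [_ Haj].
 fold a0 in Ha0. fold aj in Haj. destruct (kap_facts n v A q H) as [Hk0 Hk1]. fold k in Hk0, Hk1.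
 pose proof (mj_facts n v A q j H Hj) as Hm. fold k m in Hm.
 rewrite (Ex_decomp n v A q _ (fun i => (if Nat.eqb i 0 then Gd * (- k / a0) else 0) + (if Nat.eqb i j then Gd * (m / aj) else 0))).
 2:{ intros i Hi. unfold G, Gd. destruct (Nat.eqb_spec i 0); destruct (Nat.eqb_spec i j); try lia.
   - subst. unfold incr. replace (Nat.eqb j 0) with false by (symmetry; apply Nat.eqb_neq; lia). rewrite Nat.eqb_refl.
     unfold Lh at 1. cbn [fsum]. fold (Lh (A 0%nat) (kap A) (d 0%nat)).
     rewrite <- Rplus_assoc, exp_plus, exp_ln.
     + unfold G; fold k. unfold a0, appeal. field. unfold a0, appeal in Ha0; lra.
     + fold k. assert (k / (A 0%nat + INR (d 0%nat)) < 1); [|lra]. apply Rmult_lt_reg_r with (A 0%nat + INR (d 0%nat)).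
       * unfold a0, appeal in Ha0; lra.
       * unfold Rdiv; rewrite Rmult_assoc, Rinv_l; [|unfold a0, appeal in Ha0; lra]. pose proof (pos_INR (d 0%nat)). lra.
   - subst. unfold incr. replace (Nat.eqb 0 j) with false by (symmetry; apply Nat.eqb_neq; lia). rewrite Nat.eqb_refl.
     unfold Lg at 1. cbn [fsum]. fold (Lg (A j) (mj v A q j) (d j)).
     match goal with |- exp (?a + ?b + ?c) = _ => replace (a + b + c) with ((a + c) + b) by ring end.
     rewrite exp_plus, exp_ln.
     + unfold G. fold m. unfold aj, appeal in *. field. lra.
     + fold m. assert (0 < m / (A j + INR (d j))); [|lra]. apply Rdiv_lt_0_compat; [lra|unfold aj, appeal in Haj; lra].
   - unfold incr. replace (Nat.eqb 0 i) with false by (symmetry; apply Nat.eqb_neq; lia).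
     replace (Nat.eqb j i) with false by (symmetry; apply Nat.eqb_neq; lia). ring. }
 rewrite (fsum_ext n _ (fun i => (if Nat.eqb i 0 then tryp n v A d 0 * q 0%nat * (Gd * (- k / a0)) else 0)
     + (if Nat.eqb i j then tryp n v A d j * q j * (Gd * (m / aj)) else 0))).
 2:{ intros i Hi. destruct (Nat.eqb_spec i 0); destruct (Nat.eqb_spec i j); subst; try lia; ring. }
 rewrite fsum_plus, !fsum_indic by lia.
 assert (HW := W_pos n v A q d H). unfold WW in HW.
 destruct (q_facts n v A q j H Hj) as (Hq0&Hqj&Hqj0). pose proof H as (_&Hv&Hvp&_).
 assert (0 < v 0%nat) by (apply Hvp; lia). assert (0 < v j) by (apply Hvp; lia).
 assert (HGd : 0 < Gd) by apply exp_pos.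
 set (W := fsum n (fun j0 => v j0 * appeal A d j0)) in *.
 set (P0 := v 0%nat * q 0%nat). set (Pj := v j * q j).
 assert (HP0 : 0 < P0) by (apply Rmult_lt_0_compat; auto). assert (HPj : 0 <= Pj) by (apply Rmult_le_pos; lra).
 assert (Heq : tryp n v A d 0 * q 0%nat * (Gd * (- k / a0)) + tryp n v A d j * q j * (Gd * (m / aj))
     = Gd / W * (k * P0 * (Pj - P0) / (P0 + Pj))).
 { unfold tryp, m, mj, rho. fold W k a0 aj. fold P0 Pj. unfold P0, Pj in *. field. repeat split; try lra. }
 rewrite Heq. assert (Pj <= P0).
 { destruct (rho_facts n v A q j H Hj) as [_ Hr]. unfold rho in Hr. fold P0 Pj in Hr.
   apply Rlt_le. apply Rmult_lt_reg_r with (/ P0); [apply Rinv_0_lt_compat; auto|]. rewrite Rinv_r; lra. }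
 assert (k * P0 * (Pj - P0) / (P0 + Pj) <= 0).
 { apply div_le; [lra|]. rewrite Rmult_0_l. assert (0 < k * P0) by (apply Rmult_lt_0_compat; auto). nra. }
 assert (0 < Gd / W) by (apply Rdiv_lt_0_compat; auto). assert (0 <= Gd / W * - (k * P0 * (Pj - P0) / (P0 + Pj))) by (apply Rmult_le_pos; lra). fold Gd. lra.
Qed.

Lemma unif_L N (P : nat -> R -> Prop) : (forall j L L', P j L -> L <= L' -> P j L') ->
  (forall j, (1 <= j < N)%nat -> exists L, 0 < L /\ P j L) -> exists L, 0 < L /\ forall j, (1 <= j < N)%nat -> P j L.
Proof. intros Hm. induction N; intros H.
 - exists 1; split; [lra|]; intros; lia.
 - destruct IHN as [L1 [HL1 H1]]. { intros; apply H; lia. }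
   destruct (Nat.eq_dec N 0).
   + exists L1; split; auto; intros; lia.
   + destruct (H N ltac:(lia)) as [L2 [HL2 H2]]. exists (Rmax L1 L2). split; [apply Rlt_le_trans with L1; auto; apply Rmax_l|].
     intros j Hj. destruct (Nat.eq_dec j N).
     * subst. apply Hm with L2; auto; apply Rmax_r.
     * apply Hm with L1; [apply H1; lia|apply Rmax_l]. Qed.

Lemma natsum0 n : natsum n (fun _ => 0%nat) = 0%nat.
Proof. induction n; simpl; auto. rewrite IHn; auto. Qed.

Lemma Ex_ext n v A q F F' d : (forall e, F e = F' e) -> Ex n v A q F d = Ex n v A q F' d.
Proof. intros H. unfold Ex. rewrite H. f_equal. apply fsum_ext; intros; rewrite H; auto. Qed.

Definition Phi1 n (mu : R) (t0 M : nat) (s : nat) (d : nat -> nat) :=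
  (/ 2) ^ (natsum n d) * mu ^ t0 / ((/ 2) ^ M * mu ^ s).
Definition Phi2 n v A q (K : R) (d : nat -> nat) := / K * fsum (pred n) (fun j => G v A q (S j) d).

Lemma G_pos v A q j d : 0 < G v A q j d.
Proof. apply exp_pos. Qed.

Lemma Phi2_ge1 n v A q K d j : Hyps n v A q -> 0 < K -> (1 <= j < n)%nat -> K <= G v A q j d -> 1 <= Phi2 n v A q K d.
Proof. intros H HK Hj HG. unfold Phi2. assert (G v A q j d <= fsum (pred n) (fun j0 => G v A q (S j0) d)).
 { destruct j; [lia|]. apply (fsum_ge_term (pred n) (fun j0 => G v A q (S j0) d) j); [|lia]. intros; apply Rlt_le, G_pos. }
 apply Rmult_le_reg_l with K; auto. rewrite <- Rmult_assoc, Rinv_r by lra. lra. Qed.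

Lemma Phi2_nonneg n v A q K d : 0 < K -> 0 <= Phi2 n v A q K d.
Proof. intros HK. unfold Phi2. apply Rmult_le_pos; [apply Rlt_le, Rinv_0_lt_compat; auto|]. apply fsum_nonneg; intros; apply Rlt_le, G_pos. Qed.

Lemma Phi2_super n v A q K d : Hyps n v A q -> 0 < K -> Ex n v A q (Phi2 n v A q K) d <= Phi2 n v A q K d.
Proof. intros H HK. unfold Phi2. rewrite Ex_scal, Ex_fsum. apply Rmult_le_compat_l; [apply Rlt_le, Rinv_0_lt_compat; auto|].
 apply fsum_le. intros i Hi. apply G_super; auto; lia. Qed.

Lemma Phi1_nonneg n mu t0 M s d : 0 < mu -> 0 <= Phi1 n mu t0 M s d.
Proof. intros Hmu. unfold Phi1. apply Rlt_le, Rdiv_lt_0_compat; [apply Rmult_lt_0_compat|apply Rmult_lt_0_compat]; apply pow_lt; lra. Qed.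

Lemma Phi1_super n v A q mu t0 M s d lm : Hyps n v A q -> 0 < mu -> mu = 1 - lm / 2 -> lm <= lam n v A q d ->
  Ex n v A q (Phi1 n mu t0 M (S s)) d <= Phi1 n mu t0 M s d.
Proof. intros H Hmu Hmul Hlm. set (F := Phi1 n mu t0 M (S s) d).
 rewrite (Ex_decomp n v A q _ (fun _ => - F / 2)).
 2:{ intros i Hi. unfold F, Phi1. rewrite natsum_incr by auto. simpl pow. field. split; [apply pow_nonzero; lra|]. split; [lra|]. apply pow_nonzero; lra. }
 rewrite (fsum_ext n _ (fun i => (- F / 2) * (tryp n v A d i * q i))) by (intros; ring). rewrite fsum_scal, sum_tq.
 assert (HF : 0 <= F) by (apply Phi1_nonneg; auto).
 assert (Phi1 n mu t0 M s d = F * mu) by (unfold F, Phi1; simpl pow; field; repeat split; try apply pow_nonzero; lra).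
 rewrite H0. subst mu. assert (0 <= F * (lam n v A q d - lm)) by (apply Rmult_le_pos; lra). fold F. lra. Qed.

Lemma part2 n v A q : Hyps n v A q -> forall (sigma : nat -> nat) (b : nat -> R),
     is_perm n sigma -> (forall i, (i < n)%nat -> 0 < b i) ->
     fsum n (fun i => v (sigma i) * b i / fsum n (fun j => v (sigma j) * b j) * q i) <= q 0%nat.
Proof. intros H sigma b [Hs _] Hb. pose proof H as (Hn&_&Hvp&_).
 set (S := fsum n (fun j => v (sigma j) * b j)).
 assert (HS : 0 < S) by (apply fsum_pos; auto; intros; apply Rmult_lt_0_compat; [apply Hvp, Hs|apply Hb]; auto).
 apply Rle_trans with (fsum n (fun i => q 0%nat * (v (sigma i) * b i / S))).
 - apply fsum_le; intros i Hi. rewrite Rmult_comm. apply Rmult_le_compat_r.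
   + apply Rlt_le, Rdiv_lt_0_compat; auto. apply Rmult_lt_0_compat; [apply Hvp, Hs|apply Hb]; auto.
   + apply (q_mono n v A q); auto; lia.
 - rewrite fsum_scal, fsum_div. fold S. unfold Rdiv. rewrite Rinv_r; lra. Qed.

Lemma part1_n1 v A q : Hyps 1 v A q -> forall eps, 0 < eps -> forall delta, 0 < delta ->
     exists t0 : nat, forall T : nat, badp 1 v A q eps t0 T 1 (fun _ => 0%nat) <= delta.
Proof. intros H eps He delta Hd. exists 0%nat. intros T.
 apply Rle_trans with 0; [|lra].
 apply (badp_le 1 v A q eps 0 (fun _ _ => 0)); auto.
 - intros; lra.
 - intros s d _ _ Hb. apply (bad_imp 1 v A q eps d H) in Hb. rewrite q0_lam in Hb by auto. simpl in Hb. lra.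
 - intros s d _. unfold Ex. simpl. lra.
 - intros i Hi; lia. Qed.

Lemma bad_witness n v A q eps d : Hyps n v A q -> (2 <= n)%nat -> 0 < eps -> bad n v A q eps d = true ->
  exists j, (1 <= j < n)%nat /\ eps / INR (pred n) * appeal A d 0%nat < appeal A d j.
Proof. intros H Hn He Hb. apply (bad_imp n v A q eps d H) in Hb. rewrite q0_lam in Hb by auto.
 set (c := eps / INR (pred n)). assert (Hpn : 1 <= INR (pred n)) by (replace 1 with (INR 1) by auto; apply le_INR; lia).
 assert (Hc : 0 < c) by (apply Rdiv_lt_0_compat; lra).
 apply NNPP. intros Hno.
 assert (Hall : forall j, (1 <= j < n)%nat -> appeal A d j <= c * appeal A d 0%nat).
 { intros j Hj. apply Rnot_lt_le. intros Hlt. apply Hno. exists j. auto. }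
 pose proof (W_pos n v A q d H) as HW. unfold WW in HW. set (W := fsum n (fun j => v j * appeal A d j)) in *.
 pose proof H as (_&Hv&Hvp&_).
 destruct (appeal_ge n v A q d 0 H ltac:(lia)) as [_ Ha0].
 assert (Hv0 : 0 < v 0%nat) by (apply Hvp; lia).
 assert (fsum n (fun i => tryp n v A d i * (q 0%nat - q i)) <= fsum n (fun i => if Nat.eqb i 0 then 0 else v 0%nat * (c * appeal A d 0%nat) / W)).
 { apply fsum_le; intros i Hi. destruct (Nat.eqb_spec i 0).
   - subst. lra.
   - unfold tryp. fold W. assert (q i <= q 0%nat) by (apply (q_mono n v A q); auto; lia).
     pose proof (q_nonneg n v A q H i Hi). pose proof (q_le1 n v A q H 0 ltac:(lia)).
     destruct (appeal_ge n v A q d i H Hi) as [_ Hai]. assert (0 < v i) by (apply Hvp; auto).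
     assert (v i <= v 0%nat) by (apply Hv; lia). assert (appeal A d i <= c * appeal A d 0%nat) by (apply Hall; lia).
     assert (v i * appeal A d i <= v 0%nat * (c * appeal A d 0%nat)) by (apply Rmult_le_compat; lra).
     assert (0 <= v i * appeal A d i / W) by (apply Rlt_le, Rdiv_lt_0_compat; [apply Rmult_lt_0_compat|]; lra).
     apply Rle_trans with (v i * appeal A d i / W * 1).
     + apply Rmult_le_compat_l; lra.
     + rewrite Rmult_1_r. unfold Rdiv. apply Rmult_le_compat_r; [apply Rlt_le, Rinv_0_lt_compat|]; lra. }
 rewrite fsum_indic0 in H0.
 assert (INR (pred n) * (v 0%nat * (c * appeal A d 0%nat) / W) = eps * (v 0%nat * appeal A d 0%nat / W)) by (unfold c; field; lra).
 assert (v 0%nat * appeal A d 0%nat <= W).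
 { unfold W. apply (fsum_ge_term n (fun j => v j * appeal A d j)); [|lia]. intros.
   destruct (appeal_ge n v A q d i H H2). apply Rlt_le, Rmult_lt_0_compat; auto. }
 assert (v 0%nat * appeal A d 0%nat / W <= 1) by (apply div_le; lra).
 assert (eps * (v 0%nat * appeal A d 0%nat / W) <= eps) by (apply Rle_trans with (eps * 1); [apply Rmult_le_compat_l|]; lra).
 lra. Qed.

Lemma part1 n v A q : Hyps n v A q -> (2 <= n)%nat -> forall eps, 0 < eps -> forall delta, 0 < delta ->
     exists t0 : nat, forall T : nat, badp n v A q eps t0 T 1 (fun _ => 0%nat) <= delta.
Proof. intros H Hn eps He delta Hd.
 assert (Hpn : 1 <= INR (pred n)) by (replace 1 with (INR 1) by auto; apply le_INR; lia).
 set (c := eps / INR (pred n)). assert (Hc : 0 < c) by (apply Rdiv_lt_0_compat; lra).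
 set (K := 2 * INR (pred n) / delta). assert (HK : 0 < K) by (apply Rdiv_lt_0_compat; lra).
 pose proof H as (_&Hv&Hvp&HA&_).
 destruct (kap_facts n v A q H) as [Hk0 Hk1].
 destruct (unif_L n (fun j L => forall k l : nat, L <= A j + INR l -> c * (A 0%nat + INR k) < A j + INR l ->
    ln K <= Lg (A j) (mj v A q j) l + Lh (A 0%nat) (kap A) k)) as [L [HL HPL]].
 { intros j L L' HP HLL' k l H1 H2. apply HP; lra. }
 { intros j Hj. apply growth; auto. apply (mj_facts n v A q); auto. apply HA; lia. }
 destruct (nat_above (INR n * (L / c + L))) as [M HM].
 destruct (lam_lower n v A q H Hn) as [lm [Hlm Hlmd]].
 assert (Hlm1 : lm <= 1).
 { assert (Inv n q (fun _ => 0%nat)) by (intros i _ _; auto). pose proof (Hlmd _ H0).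
   pose proof (lam_le_q0 n v A q (fun _ => 0%nat) H). pose proof H as (_&_&_&_&Hq1&_). lra. }
 set (mu := 1 - lm / 2). assert (Hmu : 0 < mu < 1) by (unfold mu; lra).
 assert (Hy : 0 < delta / 2 * mu * (/ 2) ^ M) by (repeat apply Rmult_lt_0_compat; try lra; apply pow_lt; lra).
 destruct (pow_lt_1_zero mu ltac:(rewrite Rabs_right; lra) _ Hy) as [t0 Ht0].
 exists t0. intros T.
 apply Rle_trans with (Phi1 n mu t0 M 1 (fun _ => 0%nat) + Phi2 n v A q K (fun _ => 0%nat)).
 - apply (badp_le n v A q eps t0 (fun s d => Phi1 n mu t0 M s d + Phi2 n v A q K d)); auto.
   + intros s d _. pose proof (Phi1_nonneg n mu t0 M s d ltac:(lra)). pose proof (Phi2_nonneg n v A q K d HK). lra.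
   + intros s d Hinv Hs Hb. pose proof (Phi1_nonneg n mu t0 M s d ltac:(lra)). pose proof (Phi2_nonneg n v A q K d HK).
     destruct (bad_witness n v A q eps d H Hn He Hb) as [j [Hj Hcj]]. fold c in Hcj.
     destruct (classic (exists i, (1 <= i < n)%nat /\ L <= appeal A d i /\ c * appeal A d 0%nat < appeal A d i)) as [[i [Hi [Hi1 Hi2]]]|Hno].
     * assert (K <= G v A q i d).
       { unfold G. rewrite <- (exp_ln K) by auto. pose proof (HPL i Hi (d 0%nat) (d i) Hi1 Hi2) as Hle.
         destruct (Rle_lt_or_eq_dec _ _ Hle) as [h|h]; [apply Rlt_le, exp_increasing; auto| rewrite h; lra]. }
       pose proof (Phi2_ge1 n v A q K d i H HK Hi H2). lra.
     * assert (Haj : appeal A d j < L).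
       { apply Rnot_le_lt. intros hh. apply Hno. exists j. auto. }
       destruct (appeal_ge n v A q d 0 H ltac:(lia)) as [_ Ha0].
       assert (Hbd : forall i, (i < n)%nat -> appeal A d i <= L / c + L).
       { intros i Hi. assert (0 < L / c) by (apply Rdiv_lt_0_compat; auto).
         destruct (Nat.eq_dec i 0).
         - subst. apply Rle_trans with (L / c); [|lra]. apply le_div; auto. lra.
         - destruct (Rlt_le_dec (appeal A d i) L); [lra|].
           destruct (Rlt_le_dec (c * appeal A d 0%nat) (appeal A d i)).
           + exfalso. apply Hno. exists i. split; [lia|auto].
           + lra. }
       assert (HN : (natsum n d <= M)%nat).
       { apply INR_le. rewrite INR_natsum. apply Rle_trans with (INR n * (L / c + L)); auto.
         apply fsum_const_le. intros i Hi. pose proof (Hbd i Hi) as Hb1. pose proof (HA i Hi) as Hb2. unfold appeal in Hb1. lra. }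
       assert (1 <= Phi1 n mu t0 M s d); [|lra].
       unfold Phi1. apply le_div; [apply Rmult_lt_0_compat; apply pow_lt; lra|]. rewrite Rmult_1_l.
       apply Rmult_le_compat; try (apply pow_le; lra).
       -- apply pow_le_dec; auto; lra.
       -- apply pow_le_dec; auto; lra.
   + intros s d Hinv. rewrite Ex_plus. pose proof (Phi1_super n v A q mu t0 M s d lm H ltac:(lra) eq_refl (Hlmd d Hinv)).
     pose proof (Phi2_super n v A q K d H HK). lra.
   + intros i _ _; auto.
 - unfold Phi1, Phi2. rewrite natsum0. simpl pow.
   rewrite (fsum_ext (pred n) _ (fun _ => 1)).
   2:{ intros i _. unfold G, Lg, Lh. simpl. rewrite Rplus_0_r. apply exp_0. }
   assert (fsum (pred n) (fun _ => 1) <= INR (pred n) * 1) by (apply fsum_const_le; intros; lra).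
   assert (/ K * INR (pred n) = delta / 2) by (unfold K; field; lra).
   assert (/ K * fsum (pred n) (fun _ => 1) <= delta / 2).
   { apply Rle_trans with (/ K * (INR (pred n) * 1)); [apply Rmult_le_compat_l; [apply Rlt_le, Rinv_0_lt_compat|]; auto|]. lra. }
   assert (1 * mu ^ t0 / ((/ 2) ^ M * (mu * 1)) <= delta / 2).
   { pose proof (Ht0 t0 ltac:(lia)). rewrite Rabs_right in H3 by (apply Rle_ge, pow_le; lra).
     apply div_le. { apply Rmult_lt_0_compat; [apply pow_lt|]; lra. } lra. }
   lra.
Qed.

Theorem mainTheorem8 (n : nat) (v A q : nat -> R)
  (Hn : (1 <= n)%nat)
  (Hv_dec : forall i j, (i <= j)%nat -> (j < n)%nat -> v j <= v i)
  (Hv_pos : forall i, (i < n)%nat -> 0 < v i)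
  (HA : forall i, (i < n)%nat -> 0 < A i)
  (Hq1 : q 0%nat <= 1)
  (Hq_dec : forall i, (S i < n)%nat -> q (S i) < q i)
  (Hq_nonneg : 0 <= q (pred n)) :
  (forall eps, 0 < eps -> forall delta, 0 < delta ->
     exists t0 : nat, forall T : nat,
       badp n v A q eps t0 T 1 (fun _ => 0%nat) <= delta)
  /\
  (forall (sigma : nat -> nat) (b : nat -> R),
     is_perm n sigma ->
     (forall i, (i < n)%nat -> 0 < b i) ->
     fsum n (fun i => v (sigma i) * b i / fsum n (fun j => v (sigma j) * b j) * q i)
       <= q 0%nat).
Proof.
  assert (H : Hyps n v A q) by (repeat split; auto).
  split.
  - destruct (Nat.eq_dec n 1) as [E|E].
    + subst. apply part1_n1; auto.
    + apply part1; auto; lia.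
  - apply (part2 n v A q H).
Qed.
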